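(* Let $p$ be a prime, let $C_p\le S_p$ be cyclic of order $p$ acting regularly, and let $k\ge1$. Let $\Omega=\overline{C_p}^k\subseteq\{0,1\}^{kp^2}$. Let $Q=C_p^k$ act on $\Omega$ by $(x_1,\dots,x_k)(M_1,\dots,M_k)=(\overline{x_1}M_1,\dots,\overline{x_k}M_k)$. This is induced by a faithful permutation of the $kp^2$ coordinates, so $Q\le S_{kp^2}$. Let $P=\{(x_1,\dots,x_k)\in C_p^k: x_1x_2\cdots x_k=1\}$. Then $\beta_{Q,\Omega,d}(P,P)\ge p^{d(k^{1/d}-1)}$ for all $d\ge1$, and $\beta_{Q,\Omega}(P,P)\ge p^{\log_2 k}$.
   Context: $\overline{x}$ denotes the permutation matrix of a permutation $x$, and $\overline{C_p}$ is the set of these matrices for $x\in C_p$. General framework. Let $Q\le S_m$ act on $\{0,1\}^m$ by permuting coordinates, and let $\Omega\subseteq\{0,1\}^m$ be $Q$-invariant. For $f$ on $\Omega$, $\mathrm{Stab}_Q(f)=\{\pi\in Q: f(\pi x)=f(x)\ \forall x\in\Omega\}$. $\mathcal B_{Q,\Omega}$ is the set of $\mathrm{Stab}_Q(f)$ for $f:\Omega\to\{0,1\}$, and $\mathcal N_{Q,\Omega}$ is the set of $\mathrm{Stab}_Q(f)$ for $f:\Omega\to\mathbb N$. Let $\chi_i(x)=x_i$. For $H\le K\le Q$ with $K\in\mathcal B_{Q,\Omega}$, define $\beta_{Q,\Omega,d}(H,K)\in\mathbb N\cup\{\infty\}$ inductively. First, $\beta_{Q,\Omega,0}(H,K)$ equals: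 - $0$ if $H=Q$; - $1$ if $H<Q$ and $H=\mathrm{Stab}_Q(\chi_i|_\Omega)$ for some $i$; - $\infty$ otherwise. For $d\ge1$, $\beta_{Q,\Omega,d}(H,K)=\min\max_{i\in[r]}[H_i:H_i\cap U_i]\,\beta_{Q,\Omega,d-1}(U_i,V_i)$. The minimum is over tuples $(r,(H_i),(U_i),(L_i),(V_i))$ with $r\in\mathbb N$, $H_i,U_i\le Q$, $L_i\in\mathcal N_{Q,\Omega}$ and $V_i\in\mathcal B_{Q,\Omega}$ such that: - (a) $U_i\le V_i$ and $H_i\le L_i$; - (b) $\bigcap_i H_i=H$; - (c) $\bigcap_i L_i\le K$; - (d) $\bigcap_{h\in H_i}h^{-1}U_ih\le H_i$; - (e) $\bigcap_{h\in H_i}h^{-1}V_ih\le L_i$. Finally, $\beta_{Q,\Omega}(H,K)=\lim_{d\to\infty}\beta_{Q,\Omega,d}(H,K)$. *)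

(* Defs.v *)
From HB Require Import structures.
From mathcomp Require Import all_boot all_order all_algebra all_fingroup all_solvable.
From mathcomp Require Import all_classical all_reals all_analysis.

Set Implicit Arguments.
Unset Strict Implicit.
Unset Printing Implicit Defensive.

Import Order.TTheory GRing.Theory Num.Theory.

(* General framework.  The coordinates of {0,1}^m are indexed by an    *)
(* arbitrary finite type I (with #|I| = m); Q is a set of permutations *)
(* of I (a subgroup of Sym(I) ~ S_m), Om a subset of {0,1}^I.          *)

Section Framework.
Variable R : realType.
Variable I : finType.
Variable Q : {set {perm I}}.
Variable Om : {set {ffun I -> bool}}.

Local Open Scope group_scope.

Definition coord_act (s : {perm I}) (x : {ffun I -> bool}) : {ffun I -> bool} :=
  [ffun j => x ((s^-1)%g j)].

Definition Stab (T : eqType) (f : {ffun I -> bool} -> T) : {set {perm I}} :=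
  [set s in Q | [forall x in Om, f (coord_act s x) == f x]].

Definition inB (K : {set {perm I}}) : Prop :=
  exists f : {ffun I -> bool} -> bool, K = Stab f.
Definition inN (K : {set {perm I}}) : Prop :=
  exists f : {ffun I -> bool} -> nat, K = Stab f.

Local Open Scope ereal_scope.

Definition beta0 (H K : {set {perm I}}) : \bar R :=
  if H == Q then 0
  else if (H \proper Q) && [exists i : I, H == Stab (fun x => x i)] then 1
  else +oo.

Definition admissible (bd : {set {perm I}} -> {set {perm I}} -> \bar R)
    (H K : {set {perm I}}) : set (\bar R) :=
  [set v | exists (r : nat) (Hs Us Ls Vs : 'I_r -> {group {perm I}}),
     (forall i, (Hs i \subset Q) /\ (Us i \subset Q)) /\
     (forall i, inN (Ls i) /\ inB (Vs i)) /\
     (forall i, (Us i \subset Vs i) /\ (Hs i \subset Ls i)) /\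
     Q :&: \bigcap_(i < r) Hs i = H /\
     Q :&: \bigcap_(i < r) Ls i \subset K /\
     (forall i, \bigcap_(h in Hs i) (Us i :^ h) \subset Hs i) /\
     (forall i, \bigcap_(h in Hs i) (Vs i :^ h) \subset Ls i) /\
     v = \big[maxe/0]_(i < r)
               ((#|Hs i : Hs i :&: Us i|%:R)%:E * bd (Us i) (Vs i))].

(* beta_{Q,Om,d}: the minimum over admissible tuples (a minimum of a set
   of values in N u {+oo}, which is its infimum) *)
Fixpoint beta_d (d : nat) : {set {perm I}} -> {set {perm I}} -> \bar R :=
  match d with
  | 0 => beta0
  | d'.+1 => fun H K => ereal_inf (admissible (beta_d d') H K)
  end.

Definition beta (H K : {set {perm I}}) : \bar R :=
  limn (fun d => beta_d d H K).

End Framework.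

(* The concrete setting: coordinates (i, r, c) with i < k, r, c < p,   *)
(* i.e. k blocks of p x p matrices (k p^2 coordinates).                *)

Section Concrete.
Variables (k p : nat).

Definition Coord := ('I_k * ('I_p * 'I_p))%type.

Definition liftQ_fun (xs : {ffun 'I_k -> {perm 'I_p}}) (j : Coord) : Coord :=
  (j.1, (xs j.1 j.2.1, j.2.2)).

Lemma liftQ_inj xs : injective (liftQ_fun xs).
Proof.
move=> [i [r c]] [i' [r' c']] [ei er ec]; rewrite /= in ei er ec.
subst i' c'; rewrite (perm_inj er) //.
Qed.

Definition liftQ (xs : {ffun 'I_k -> {perm 'I_p}}) : {perm Coord} :=
  perm (@liftQ_inj xs).

Variable C : {set {perm 'I_p}}.

Definition Qc : {set {perm Coord}} :=
  liftQ @: [set xs : {ffun 'I_k -> {perm 'I_p}} | [forall i, xs i \in C]].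

Definition Pc : {set {perm Coord}} :=
  liftQ @: [set xs : {ffun 'I_k -> {perm 'I_p}} |
              [forall i, xs i \in C] && ((\prod_(i < k) xs i)%g == 1%g)].

(* permutation matrix of x : entry (r, c) is 1 iff r = x c *)
Definition permmx (x : {perm 'I_p}) (r c : 'I_p) : bool := r == x c.

Definition Omc : {set {ffun Coord -> bool}} :=
  [set M : {ffun Coord -> bool} |
     [forall i : 'I_k, exists x in C,
        forall r : 'I_p, forall c : 'I_p, M (i, (r, c)) == permmx x r c]].

End Concrete.

(* Main.v *)
Require Import Defs.
From HB Require Import structures.
From mathcomp Require Import all_boot all_order all_algebra all_fingroup all_solvable.
From mathcomp Require Import all_classical all_reals all_analysis.
Import Order.TTheory GRing.Theory Num.Theory.

Module MA.

Section Abstract.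
Local Open Scope group_scope.
Variables (gT : finGroupType) (Q : {group gT}) (p k : nat).
Hypotheses (hp : prime p) (cQ : abelian Q) (pQ : p.-group Q).
Variable NT : {set 'I_k} -> {group gT}.
Hypotheses (NTsub : forall T, NT T \subset Q) (NT0 : NT finset.set0 = Q :> {set gT})
  (NTU : forall T T', NT T :&: NT T' \subset NT (T :|: T'))
  (NTanti : forall T T' : {set 'I_k}, T \subset T' -> NT T' \subset NT T).

Definition local m (H : {set gT}) := forall x, x \in Q -> x \notin H ->
  exists2 T : {set 'I_k}, (#|T| <= m)%N & x \notin H * NT T.

Lemma local_mono m n H : (m <= n)%N -> local m H -> local n H.
Proof.
move=> mn lH x xQ xH; have [T cT xT] := lH x xQ xH; exists T => //.
exact: leq_trans mn.
Qed.

Lemma prop_idx (M M' : {group gT}) : M \subset Q -> M' \proper M ->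
  (p * #|M'| <= #|M|)%N.
Proof.
move=> MQ prM.
have pM : p.-group M := pgroupS MQ pQ.
have pM' : p.-group M' := pgroupS (proper_sub prM) pM.
have := cardSg (proper_sub prM); have := proper_card prM.
rewrite (card_pgroup pM) (card_pgroup pM').
set a := logn p #|M|; set b := logn p #|M'|.
move=> lt dv.
have [m le_m eq_m] := dvdn_pfactor _ _ hp dv.
have /eqP := eq_m; rewrite eqn_exp2l ?prime_gt1 // => /eqP em; subst m.
rewrite -expnS leq_exp2l ?prime_gt1 //.
move: lt; rewrite ltn_exp2l ?prime_gt1 //.
Qed.

Lemma mulNT_group (U : {group gT}) T : U \subset Q -> group_set (U * NT T).
Proof.
move=> UQ; apply/comm_group_setP; apply: normC.
idtac.
have h1 := fintype.subset_trans (fintype.subset_trans UQ cQ) (centS (NTsub T)). exact: fintype.subset_trans h1 (cent_sub _).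
Qed.

Lemma chain m (U : {group gT}) : U \subset Q -> local m U ->
  forall M : {group gT}, U \subset M -> M \subset Q ->
  exists T : {set 'I_k}, exists s, [/\ (#|T| <= s * m)%N, (p ^ s * #|U| <= #|M|)%N
     & M :&: NT T \subset U].
Proof.
move=> UQ lU M; move: {2}#|M| (leqnn #|M|) => n; elim: n M => [|n IH] M.
  by rewrite leqn0 cards_eq0 => /eqP M0; have := group1 M; rewrite M0 inE.
move=> cM UM MQ.
case: (boolP (M \subset U)) => MU.
  exists finset.set0, 0%N; rewrite cards0 expn0 mul1n NT0; split => //.
    exact: subset_leq_card.
  exact: fintype.subset_trans (finset.subsetIl _ _) MU.
have [h hM hU] : exists2 h, h \in M & h \notin U.
  by move/subsetPn: MU => [h hM hU]; exists h.
have hQ : h \in Q := fintype.subsetP MQ h hM.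
have [Tb cTb hUN] := lU h hQ hU.
pose M' := (M :&: Group (mulNT_group U Tb UQ))%G.
have UM' : U \subset M'.
  rewrite finset.subsetI UM /=; apply/fintype.subsetP => u uU; apply/mulsgP.
  by exists u 1 => //; rewrite ?group1 ?mulg1.
have prM : M' \proper M.
  rewrite finset.properEneq finset.subsetIl andbT; apply/eqP => eM.
  by move: hM; rewrite -eM inE /= (negPf hUN) andbF.
have cM' : (#|M'| <= n)%N.
  by rewrite -ltnS; exact: leq_trans (proper_card prM) cM.
have M'Q : M' \subset Q := fintype.subset_trans (proper_sub prM) MQ.
have [T' [s' [cT' cU sub']]] := IH M' cM' UM' M'Q.
exists (T' :|: Tb), s'.+1; split.
- apply: leq_trans (leq_card_setU _ _) _.
  rewrite mulSn addnC; exact: leq_add cTb cT'.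
- rewrite expnS -mulnA; apply: (leq_trans _ (prop_idx _ _ MQ prM)).
  by rewrite leq_mul2l cU orbT.
- apply/fintype.subsetP => x /finset.setIP [xM xN].
  have xNb : x \in NT Tb := fintype.subsetP (NTanti _ _ (finset.subsetUr _ _)) x xN.
  have xN' : x \in NT T' := fintype.subsetP (NTanti _ _ (finset.subsetUl _ _)) x xN.
  apply: (fintype.subsetP sub'); rewrite !inE /= xM xN' andbT /=.
  by apply/mulsgP; exists 1 x; rewrite ?group1 ?mul1g.
Qed.

Lemma localB m c (U H : {group gT}) : U \subset H -> H \subset Q -> local m U ->
  (#|H| < p ^ c.+1 * #|U|)%N -> local (c.+1 * m) H.
Proof.
move=> UH HQ lU cH x xQ xH.
have UQ := fintype.subset_trans UH HQ.
have [T0 [s [cT0 cU sub0]]] := chain m U UQ lU H UH HQ.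
have sc : (s <= c)%N.
  have := leq_ltn_trans cU cH; rewrite ltn_mul2r => /andP [_].
  by rewrite ltn_exp2l ?prime_gt1.
case: (boolP (x \in H * NT T0)) => xHN; last first.
  exists T0 => //; apply: leq_trans cT0 _; rewrite leq_mul2r leqW ?orbT //.
case/mulsgP: xHN => h n hH nN xe.
have nQ : n \in Q := fintype.subsetP (NTsub T0) n nN.
have nU : n \notin U.
  apply/negP => nU; move: xH; rewrite xe groupM //.
  exact: fintype.subsetP UH n nU.
have [Tb cTb nUN] := lU n nQ nU.
exists (T0 :|: Tb).
  apply: leq_trans (leq_card_setU _ _) _; rewrite mulSn addnC; apply: leq_add => //.
  apply: leq_trans cT0 _; by rewrite leq_mul2r sc orbT.
apply/negP => /mulsgP [h' n' h'H n'N xe'].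
have n'0 : n' \in NT T0 := fintype.subsetP (NTanti _ _ (finset.subsetUl _ _)) n' n'N.
have n'b : n' \in NT Tb := fintype.subsetP (NTanti _ _ (finset.subsetUr _ _)) n' n'N.
have uU : h'^-1 * h \in U.
  apply: (fintype.subsetP sub0); rewrite inE groupM ?groupV //=.
  have -> : h'^-1 * h = n' * n^-1.
    apply: (mulgI h'); rewrite mulgA mulgV mul1g.
    apply: (mulIg n); rewrite -xe xe' -!mulgA mulVg mulg1 //.
  by rewrite groupM ?groupV.
move/negP: nUN; apply; apply/mulsgP; exists (h'^-1 * h)^-1 n'; rewrite ?groupV //.
rewrite invMg invgK -mulgA -xe' xe mulgA mulVg mul1g //.
Qed.

End Abstract.

End MA.
Import MA.

Module MB.

Section BigMax.
Variable R : realType.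
Local Open Scope ereal_scope.

Lemma bigmax_seq_ge0 (T : Type) (s : seq T) (F : T -> \bar R) :
  0 <= \big[maxe/0]_(i <- s) F i.
Proof. elim: s => [|a s IH]; rewrite ?big_nil ?big_cons //. by rewrite le_max IH orbT. Qed.

Lemma bigmax_seq_ge (T : eqType) (s : seq T) (F : T -> \bar R) i :
  i \in s -> F i <= \big[maxe/0]_(j <- s) F j.
Proof.
elim: s => [|a s IH] //; rewrite inE big_cons => /orP [/eqP -> | /IH h].
  by rewrite le_max lexx.
by rewrite le_max h orbT.
Qed.

Lemma bigmax_seq_mono (T : Type) (s : seq T) (F G : T -> \bar R) :
  (forall i, F i <= G i) ->
  \big[maxe/0]_(i <- s) F i <= \big[maxe/0]_(i <- s) G i.
Proof.
move=> FG; elim: s => [|a s IH]; rewrite ?big_nil ?big_cons //.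
by apply: le_max2.
Qed.

Lemma bigmax_ge0 r (F : 'I_r -> \bar R) : 0 <= \big[maxe/0]_(i < r) F i.
Proof. exact: bigmax_seq_ge0. Qed.

Lemma bigmax_ge r (F : 'I_r -> \bar R) i : F i <= \big[maxe/0]_(j < r) F j.
Proof. apply: bigmax_seq_ge; exact: mem_index_enum. Qed.

Lemma bigmax_mono r (F G : 'I_r -> \bar R) : (forall i, F i <= G i) ->
  \big[maxe/0]_(i < r) F i <= \big[maxe/0]_(i < r) G i.
Proof. exact: bigmax_seq_mono. Qed.
Lemma bigmax_le r (F : 'I_r -> \bar R) c : 0 <= c -> (forall i, F i <= c) ->
  \big[maxe/0]_(i < r) F i <= c.
Proof.
move=> c0 Fc; rewrite /index_enum; elim: (Finite.enum _) => [|a s IH].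
  by rewrite big_nil.
by rewrite big_cons ge_max Fc IH.
Qed.
End BigMax.

End MB.
Import MB.

Module MC.

Section Mono.
Variables (R : realType) (I : finType) (Q : {group {perm I}}) (Om : {set {ffun I -> bool}}).
Hypothesis OmQ : forall s x, s \in Q -> x \in Om -> coord_act s x \in Om.

Lemma coord_act1 (x : {ffun I -> bool}) : coord_act 1%g x = x.
Proof. by apply/ffunP => j; rewrite ffunE invg1 perm1. Qed.

Lemma coord_actM (s t : {perm I}) (x : {ffun I -> bool}) : coord_act (s * t)%g x = coord_act t (coord_act s x).
Proof. by apply/ffunP => j; rewrite !ffunE invMg permM. Qed.

Lemma Stab_group (T : eqType) (f : {ffun I -> bool} -> T) : group_set (Stab Q Om f).
Proof.
apply/group_setP; split.
  rewrite inE group1 /=; apply/forall_inP => x _; by rewrite coord_act1.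
move=> s t; rewrite !inE => /andP [sQ /forall_inP sS] /andP [tQ /forall_inP tS].
rewrite groupM //=; apply/forall_inP => x xO.
by rewrite coord_actM (eqP (tS _ (OmQ _ _ sQ xO))) sS.
Qed.

Local Open Scope ereal_scope.

Lemma beta_mono d (H K : {set {perm I}}) : H \subset K ->
  beta_d R Q Om d.+1 H K <= beta_d R Q Om d H K.
Proof.
elim: d H K => [|d IH] H K HK.
  rewrite /= /beta0.
  case: ifP => [/eqP HQ | HQ].
    apply: ge_ereal_inf; exists 0 => //.
    exists 0%N, (fun _ => 1%G), (fun _ => 1%G), (fun _ => 1%G), (fun _ => 1%G).
    split; first by case.
    split; first by case.
    split; first by case.
    split; first by rewrite big_ord0 finset.setIT HQ.
    split; first by rewrite big_ord0 finset.setIT -HQ.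
    split; first by case.
    split; first by case.
    by rewrite big_ord0.
  case: ifP => [/andP [prH /existsP [j /eqP Hj]] | _]; last by rewrite leey.
  pose G := Group (Stab_group _ (fun x : {ffun I -> bool} => x j)).
  have GH : gval G = H by rewrite Hj.
  apply: ge_ereal_inf.
  exists (\big[maxe/0]_(i < 1) ((#|G : G :&: G|%g%:R)%:E * beta0 R Q Om G G)); last first.
    apply: bigmax_le; first by rewrite lee01.
    move=> i; rewrite finset.setIid indexgg /beta0 GH.
    rewrite (negbTE (proper_neq prH)) prH /=.
    have -> : [exists i, H == Stab Q Om (fun x : {ffun I -> bool} => x i)] by apply/existsP; exists j; rewrite Hj.
    by rewrite mul1e.
  exists 1%N, (fun _ => G), (fun _ => G), (fun _ => G), (fun _ => G).
  split; first by move=> i; rewrite GH (proper_sub prH).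
  split.
    move=> i; split; last by exists (fun x : {ffun I -> bool} => x j).
    exists (fun x : {ffun I -> bool} => nat_of_bool (x j)).
    apply/setP => s; rewrite /= !inE; congr (_ && _).
    apply: eq_forallb => x; case: (x \in Om) => //=; by case: (coord_act s x j); case: (x j).
  have GK : G \subset K by rewrite GH.
  split; first by move=> i; split.
  split; first by rewrite big_ord1 GH (finset.setIidPr (proper_sub prH)).
  split; first by rewrite big_ord1 GH (finset.setIidPr (proper_sub prH)) -GH.
  split; first by move=> i; apply: (fintype.subset_trans (finset.bigcap_inf 1%g (group1 G))); rewrite conjsg1.
  split; first by move=> i; apply: (fintype.subset_trans (finset.bigcap_inf 1%g (group1 G))); rewrite conjsg1.
  done.
rewrite /=.
apply: le_ereal_inf_tmp => v [r [Hs [Us [Ls [Vs [c1 [c2 [ca [cb [cc [cd [ce ->]]]]]]]]]]]].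
apply: ge_ereal_inf.
exists (\big[maxe/0]_(i < r) ((#|Hs i : Hs i :&: Us i|%g%:R)%:E * beta_d R Q Om d.+1 (Us i) (Vs i))).
  by exists r, Hs, Us, Ls, Vs.
apply: bigmax_mono => i; apply: lee_wpmul2l; first by rewrite lee_fin.
by apply: IH; case: (ca i).
Qed.
End Mono.

End MC.
Import MC.

Module ME.
Local Open Scope group_scope.

Lemma prod1 (gT : finGroupType) n (F : 'I_n -> gT) a :
  (forall i, i != a -> F i = 1) -> \prod_(i < n) F i = F a.
Proof.
move=> h; rewrite (eq_bigr (fun i => if i == a then F a else 1)); last first.
  by move=> i _; case: eqP => [->|/eqP/h].
by rewrite -big_mkcond big_pred1_eq.
Qed.

Lemma prod2 (gT : finGroupType) n (F : 'I_n -> gT) a b : a != b ->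
  (forall i, i != a -> i != b -> F i = 1) -> commute (F a) (F b) ->
  \prod_(i < n) F i = F a * F b.
Proof.
elim: n F a b => [|n IH] F a b; first by case: a.
move=> ab h cab; rewrite big_ord_recr /=.
have wne (i : 'I_n) : widen_ord (leqnSn n) i != ord_max.
  by rewrite -val_eqE /= neq_ltn ltn_ord.
case: (eqVneq a ord_max) => [ea|na].
  have bl : (b < n)%N by rewrite ltn_neqAle -ltnS ltn_ord andbT; move: ab; rewrite ea eq_sym -val_eqE.
  rewrite (@prod1 _ _ _ (Ordinal bl)); last first.
    move=> i ib; apply: h; first by rewrite ea.
    by apply: contraNneq ib => e; apply/eqP/val_inj; rewrite /= -e.
  have -> : widen_ord (leqnSn n) (Ordinal bl) = b by apply: val_inj.
  by rewrite -ea cab.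
case: (eqVneq b ord_max) => [eb|nb].
  have al : (a < n)%N by rewrite ltn_neqAle -ltnS ltn_ord andbT; move: na; rewrite -val_eqE.
  rewrite (@prod1 _ _ _ (Ordinal al)); last first.
    move=> i ia; apply: h; last by rewrite eb.
    by apply: contraNneq ia => e; apply/eqP/val_inj; rewrite /= -e.
  have -> : widen_ord (leqnSn n) (Ordinal al) = a by apply: val_inj.
  by rewrite eb.
have al : (a < n)%N by rewrite ltn_neqAle -ltnS ltn_ord andbT; move: na; rewrite -val_eqE.
have bl : (b < n)%N by rewrite ltn_neqAle -ltnS ltn_ord andbT; move: nb; rewrite -val_eqE.
rewrite (h ord_max) 1?eq_sym // mulg1.
have wa : widen_ord (leqnSn n) (Ordinal al) = a by apply: val_inj.
have wb : widen_ord (leqnSn n) (Ordinal bl) = b by apply: val_inj.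
rewrite (IH _ (Ordinal al) (Ordinal bl)) ?wa ?wb //.
move=> i ia ib; apply: h.
  rewrite -wa; apply: contra ia => /eqP e; apply/eqP/val_inj; exact: (congr1 val e).
rewrite -wb; apply: contra ib => /eqP e; apply/eqP/val_inj; exact: (congr1 val e).
Qed.

End ME.
Import ME.

Module MD.

Section Conc.
Local Open Scope group_scope.
Variables (p : nat) (hp : prime p) (C : {group {perm 'I_p}}) (hcyc : cyclic C)
  (hCp : #|C| = p) (k : nat) (hk : (0 < k)%N).

Local Notation gT := {perm Coord k p}.
Local Notation FF := {ffun 'I_k -> {perm 'I_p}}.

Lemma liftQE (xs : FF) j : liftQ xs j = (j.1, (xs j.1 j.2.1, j.2.2)).
Proof. by rewrite /liftQ permE. Qed.

Lemma liftQM (xs ys : FF) : liftQ xs * liftQ ys = liftQ [ffun i => xs i * ys i].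
Proof. by apply/permP => j; rewrite permM !liftQE ffunE permM. Qed.

Lemma liftQ1 : liftQ [ffun _ => 1] = 1 :> gT.
Proof. by apply/permP => [[i [r c]]]; rewrite liftQE ffunE !perm1. Qed.

Lemma liftQ_inj2 (xs ys : FF) : liftQ xs = liftQ ys -> xs = ys.
Proof.
move=> e; apply/ffunP => i; apply/permP => r.
have := congr1 (fun s : gT => s (i, (r, r))) e; rewrite /= !liftQE /=.
by case.
Qed.

Definition Cf : {set FF} := [set xs : FF | [forall i, xs i \in C]].

Lemma Qc_group : group_set (Qc k C).
Proof.
apply/group_setP; split.
  rewrite -liftQ1; apply: imset_f; rewrite inE; apply/forallP => i.
  by rewrite ffunE group1.
move=> s t /imsetP [xs xC ->] /imsetP [ys yC ->]; move: xC yC; rewrite !inE.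
move=> /forallP xC /forallP yC; rewrite liftQM; apply: imset_f.
rewrite inE; apply/forallP => i; by rewrite ffunE groupM ?xC ?yC.
Qed.


Definition Qg := Group Qc_group.

Lemma cC : abelian C. Proof. exact: cyclic_abelian. Qed.

Lemma Qg_abelian : abelian Qg.
Proof.
apply/fintype.subsetP => s /imsetP [xs xC ->]; apply/centP => t /imsetP [ys yC ->].
rewrite /commute !liftQM; congr liftQ; apply/ffunP => i; rewrite !ffunE.
move: xC yC; rewrite !inE => /forallP xC /forallP yC.
exact: (centsP cC _ (xC i) _ (yC i)).
Qed.

Lemma card_Qc : #|Qc k C| = (p ^ k)%N.
Proof.
rewrite /Qc card_imset; last by move=> x y; apply: liftQ_inj2.
transitivity #|ffun_on_mem 'I_k (mem C)|; last by rewrite card_ffun_on card_ord hCp.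
apply: eq_card => xs; rewrite inE; apply/forallP/ffun_onP => h i; exact: h.
Qed.

Lemma Qg_pgroup : p.-group Qg.
Proof. by rewrite /pgroup /= card_Qc pnatX pnat_id. Qed.

Definition NTs (T : {set 'I_k}) : {set gT} :=
  [set s in Qc k C | [forall j : Coord k p, (j.1 \in T) ==> (s j == j)]].

Lemma NT_group T : group_set (NTs T).
Proof.
apply/group_setP; split.
  rewrite inE; apply/andP; split; first exact: (group1 Qg).
  apply/forallP => j; by rewrite perm1 eqxx implybT.
move=> s t; rewrite !inE => /andP [sQ /forallP sF] /andP [tQ /forallP tF].
apply/andP; split; first exact: (groupM (G := Qg)).
apply/forallP => j; apply/implyP => jT.
by rewrite permM (eqP (implyP (sF j) jT)) (implyP (tF j) jT).
Qed.

Definition NT T := Group (NT_group T).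

Lemma NTsub T : NT T \subset Qg.
Proof. apply/fintype.subsetP => s; by rewrite inE => /andP []. Qed.

Lemma NT0 : NT finset.set0 = Qg :> {set gT}.
Proof.
apply/setP => s; rewrite /= inE; case: (s \in Qc k C) => //=.
by apply/forallP => j; rewrite inE.
Qed.

Lemma NTU T T' : NT T :&: NT T' \subset NT (T :|: T').
Proof.
apply/fintype.subsetP => s; rewrite !inE => /andP [/andP [sQ /forallP a] /andP [_ /forallP b]].
rewrite sQ /=; apply/forallP => j; rewrite inE; apply/implyP => /orP [h|h].
  exact: (implyP (a j) h).
exact: (implyP (b j) h).
Qed.

Lemma NTanti (T T' : {set 'I_k}) : T \subset T' -> NT T' \subset NT T.
Proof.
move=> TT; apply/fintype.subsetP => s; rewrite !inE => /andP [sQ /forallP a].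
rewrite sQ /=; apply/forallP => j; apply/implyP => h.
exact: (implyP (a j) (fintype.subsetP TT _ h)).
Qed.


Lemma liftQV (xs : FF) : (liftQ xs)^-1 = liftQ [ffun i => (xs i)^-1].
Proof.
apply: (mulgI (liftQ xs)); rewrite mulgV liftQM -liftQ1; congr liftQ.
by apply/ffunP => i; rewrite !ffunE mulgV.
Qed.

Lemma OmQ (s : gT) M : s \in Qg -> M \in Omc k C -> coord_act s M \in Omc k C.
Proof.
move=> /imsetP [xs + ->]; rewrite !inE => /forallP xC /forallP hM.
apply/forallP => i; have /exists_inP [y yC /forallP hy] := hM i.
apply/exists_inP; exists (y * xs i); first by rewrite groupM ?xC.
apply/forallP => r; apply/forallP => c; rewrite ffunE liftQV liftQE /= ffunE.
rewrite (eqP (forallP (hy _) c)) /permmx permM.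
by rewrite -(inj_eq (@perm_inj _ (xs i))) permKV.
Qed.

Definition locc m (H : {set gT}) := local _ Qg k NT m H.

Lemma leaf_local (j : Coord k p) (H : {set gT}) :
  H = Stab (Qc k C) (Omc k C) (fun x : {ffun Coord k p -> bool} => x j) -> locc 1 H.
Proof.
move=> -> x xQ xH; exists [set j.1]; first by rewrite cards1.
apply/negP => /mulsgP [h n hS nN xe]; move/negP: xH; apply.
have nQ : n \in Qg := fintype.subsetP (NTsub _) _ nN.
move: hS nN; rewrite !inE => /andP [hQ /forall_inP hS] /andP [_ /forallP nF].
rewrite xe (groupM (G := Qg)) //=; apply/forall_inP => M MO.
have nj : n j = j by apply/eqP; apply: (implyP (nF j)); rewrite inE.
have nj' : (n^-1) j = j by rewrite -{1}nj permK.
rewrite coord_actM ffunE nj'; exact: hS.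
Qed.

Lemma Q_local m : locc m (Qc k C).
Proof. by move=> x xQ; rewrite /= xQ. Qed.

Lemma P_notlocal : ~ locc k.-1 (Pc k C).
Proof.
have [g gC g1] : exists2 g, g \in C & g != 1.
  by apply/trivgPn; rewrite -cardG_gt1 hCp prime_gt1.
pose i0 : 'I_k := Ordinal hk.
pose xs0 : FF := [ffun i => if i == i0 then g else 1].
have xs0C : xs0 \in Cf by rewrite inE; apply/forallP => i; rewrite ffunE; case: ifP; rewrite ?group1.
have xQ : liftQ xs0 \in Qg by apply: imset_f.
move=> lP; have xP : liftQ xs0 \notin Pc k C.
  apply/negP => /imsetP [ys + /liftQ_inj2 e]; rewrite -e inE => /andP [_ /eqP].
  rewrite (@prod1 _ _ _ i0); first by rewrite ffunE eqxx; apply/eqP.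
  by move=> i /negPf ne; rewrite ffunE ne.
have [T cT xT] := lP _ xQ xP; move/negP: xT; apply.
have /fintype.subsetPn [j _ jT] : ~~ ([set: 'I_k] \subset T).
  apply/negP => /subset_leq_card; rewrite cardsT card_ord.
  move=> c2; have : (k <= k.-1)%N := leq_trans c2 cT. by rewrite -ltnS prednK // ltnn.
case: (eqVneq j i0) => [ji|ji].
  apply/mulsgP; exists 1 (liftQ xs0); rewrite ?mul1g //.
    rewrite -liftQ1; apply: imset_f; rewrite inE; apply/andP; split.
      by apply/forallP => i; rewrite ffunE group1.
    by apply/eqP; apply: big1 => i _; rewrite ffunE.
  rewrite inE xQ /=; apply/forallP => jj; apply/implyP => jT'.
  rewrite liftQE ffunE; have -> : (jj.1 == i0) = false.
    by apply/negP => /eqP e; move: jT; rewrite ji -e jT'.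
  by rewrite perm1; case: jj {jT'}=> [a [b c]].
pose ys : FF := [ffun i => if i == i0 then g else if i == j then g^-1 else 1].
have ysC : ys \in Cf.
  by rewrite inE; apply/forallP => i; rewrite ffunE; case: ifP; rewrite ?gC //; case: ifP; rewrite ?groupV ?group1.
have yP : liftQ ys \in Pc k C.
  apply: imset_f; rewrite inE; move: ysC; rewrite inE => -> /=.
  rewrite (@prod2 _ _ _ i0 j); first by rewrite !ffunE eqxx eq_sym (negPf ji) eqxx mulgV.
  - by rewrite eq_sym.
  - by move=> i /negPf a /negPf b; rewrite ffunE a b.
  - by rewrite !ffunE eqxx (negPf ji) eqxx; apply: commuteV.
have yQ : liftQ ys \in Qg by apply: imset_f.
apply/mulsgP; exists (liftQ ys) ((liftQ ys)^-1 * liftQ xs0); rewrite ?mulKVg //.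
rewrite inE (groupM (G := Qg)) ?groupV //=; apply/forallP => jj; apply/implyP => jT'.
rewrite liftQV liftQM liftQE !ffunE.
have jjj : (jj.1 == j) = false by apply/negP => /eqP e; move: jT; rewrite -e jT'.
rewrite jjj; case: (jj.1 == i0); rewrite ?invg1 ?mulVg ?mulg1 perm1; by case: jj {jT' jjj}=> [a [b c]].
Qed.

End Conc.

End MD.
Import MD.

Module MF.

Section Main.
Variables (R : realType) (p : nat) (hp : prime p) (C : {group {perm 'I_p}}) (hcyc : cyclic C)
  (hCp : #|C| = p) (k : nat) (hk : (0 < k)%N).

Local Notation gT := {perm Coord k p}.
Local Notation Q := (Qg p C k).

Lemma locB m c (U H : {group gT}) : U \subset H -> H \subset Q ->
  locc p C k m U -> (#|H| < p ^ c.+1 * #|U|)%N -> locc p C k (c.+1 * m) H.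
Proof.
move=> UH HQ lU cH.
have := @localB _ Q p k hp (@Qg_abelian p C hcyc k) (@Qg_pgroup p hp C hCp k) (NT p C k).
move=> /(_ (@NTsub p C k) (NT0 p C k) (@NTanti p C k) m c U H UH HQ lU cH).
done.
Qed.

Local Open Scope ring_scope.

Lemma claim d : forall (H K : {set gT}) (n : nat) (z : R), ~ locc p C k n H ->
  (forall cs : seq nat, size cs = d -> (n < \prod_(c <- cs) c.+1)%N ->
      z <= p%:R ^+ (\sum_(c <- cs) c)) ->
  (z%:E <= beta_d R (Qc k C) (Omc k C) d H K)%E.
Proof.
elim: d => [|d IH] H K n z nl hz.
  rewrite /= /beta0; case: ifP => [/eqP HQ|_].
    by exfalso; apply: nl; rewrite HQ; exact: Q_local.
  case: ifP => [/andP [_ /existsP [j /eqP Hj]] | _]; last by rewrite leey.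
  case: n nl hz => [|n] nl hz.
    by have := hz [::] erefl; rewrite !big_nil expr0 => /(_ isT) z1; rewrite lee_fin.
  exfalso; apply: nl; apply: (@local_mono _ Q k (NT p C k) 1) => //.
  exact: leaf_local Hj.
rewrite /=; apply: le_ereal_inf_tmp => v [r [Hs [Us [Ls [Vs [c1 [c2 [ca [cb [cc [cd [ce ->]]]]]]]]]]]].
case: (lerP z 0) => z0.
  by apply: (le_trans _ (bigmax_ge0 _ _ _)); rewrite lee_fin.
have HsQ i : Hs i \subset Q := (c1 i).1.
have UH i : Us i \subset Hs i.
  apply: fintype.subset_trans (cd i); apply/finset.bigcapsP => h hH.
  have hQ : h \in Q := fintype.subsetP (HsQ i) h hH.
  have : h \in 'N(Us i)%g.
    apply: (fintype.subsetP (cent_sub _)); apply: (fintype.subsetP (centS (c1 i).2)).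
    exact: (fintype.subsetP (@Qg_abelian p C hcyc k)) h hQ.
  by move/normP => ->.
have HHs i : H \subset Hs i.
  rewrite -cb; apply: fintype.subset_trans (finset.subsetIr _ _) _.
  exact: finset.bigcap_inf.
pose c i := trunc_log p #|Hs i : Us i|%g.
have idx i : (p ^ c i <= #|Hs i : Us i|%g < p ^ (c i).+1)%N.
  exact: trunc_log_bounds (prime_gt1 hp) (indexg_gt0 _ _).
have [i ni] : exists i, ~ locc p C k (n %/ (c i).+1) (Us i).
  apply/existsNP => hall; apply: nl => x xQ xH.
  have [i xi] : exists i, x \notin Hs i.
    case: (boolP [exists i, x \notin Hs i]) => [/existsP [i xi]|]; first by exists i.
    rewrite negb_exists => /forallP allin; exfalso; move/negP: xH; apply.
    rewrite -cb inE xQ; apply/finset.bigcapP => i _; by have := allin i; rewrite negbK.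
  have lH : locc p C k n (Hs i).
    apply: (@local_mono _ Q k (NT p C k) ((c i).+1 * (n %/ (c i).+1))).
      by rewrite mulnC leq_trunc_div.
    apply: locB (UH i) (HsQ i) (hall i) _.
    rewrite -(Lagrange (UH i)) mulnC ltn_pmul2r ?cardG_gt0 //; by case/andP: (idx i).
  have [T cT xT] := lH x xQ xi; exists T => //.
  apply: contra xT; apply: (fintype.subsetP (mulSg _ (HHs i))).
set c0 := c i.
apply: (le_trans _ (bigmax_ge _ _ _ i)); rewrite /= (finset.setIidPr (UH i)).
have pc0 : 0 < p%:R ^+ c0 :> R by rewrite exprn_gt0 // ltr0n prime_gt0.
have hIH := IH (Us i) (Vs i) (n %/ c0.+1)%N (z / (p%:R ^+ c0)) ni.
have : ((z / p%:R ^+ c0)%:E <= beta_d R (Qc k C) (Omc k C) d (Us i) (Vs i))%E.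
  apply: hIH => cs scs ncs.
  have := hz (c0 :: cs); rewrite /= scs big_cons => /(_ erefl).
  rewrite ltn_divLR // in ncs; rewrite mulnC ncs big_cons exprD => /(_ isT) h.
  by rewrite ler_pdivrMr // mulrC.
move=> hb.
have b0 : (0 <= beta_d R (Qc k C) (Omc k C) d (Us i) (Vs i))%E.
  apply: le_trans hb; rewrite lee_fin; apply: divr_ge0; [exact: ltW | exact: ltW].
apply: (@le_trans _ _ ((p%:R ^+ c0)%:E * beta_d R (Qc k C) (Omc k C) d (Us i) (Vs i))%E).
  apply: (@le_trans _ _ ((p%:R ^+ c0)%:E * (z / p%:R ^+ c0)%:E)%E).
    by rewrite -EFinM mulrC divfK ?gt_eqF.
  by apply: lee_wpmul2l => //; rewrite lee_fin ltW.
apply: lee_wpmul2r => //; rewrite lee_fin -natrX ler_nat.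
by case/andP: (idx i).
Qed.
End Main.

End MF.
Import MF.

Module MG.
Local Open Scope ring_scope.

Lemma prod_le_exp2 (cs : seq nat) : (\prod_(c <- cs) c.+1 <= 2 ^ (\sum_(c <- cs) c))%N.
Proof.
elim: cs => [|c cs IH]; first by rewrite !big_nil.
rewrite !big_cons expnD; apply: leq_mul => //; exact: ltn_expl.
Qed.

Lemma amgm_bound (R : realType) (k d : nat) (cs : seq nat) : (0 < d)%N -> size cs = d ->
  (k <= \prod_(c <- cs) c.+1)%N ->
  d%:R * ((k%:R : R) `^ (d%:R)^-1 - 1) <= (\sum_(c <- cs) c)%:R.
Proof.
move=> d0 scs kP.
set S := (\sum_(c <- cs) c)%N.
pose E (i : 'I_d) : R := (nth 0%N cs i).+1%:R.
have d0R : (0 : R) < d%:R by rewrite ltr0n.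
pose mu : R := (\sum_(i in 'I_d) E i) / #|'I_d|%:R.
have sumE : \sum_(i in 'I_d) E i = (S + d)%:R.
  rewrite /S -natr_sum; congr (_%:R).
  rewrite (big_nth 0%N) big_mkord scs.
  rewrite -[X in (_ + X)%N](card_ord d) -sum1_card -big_split /=.
  by apply: eq_bigr => i _; rewrite addn1.
have prodE : \prod_(i in 'I_d) E i = (\prod_(c <- cs) c.+1)%:R.
  rewrite natr_prod (big_nth 0%N) big_mkord scs.
  by apply: eq_bigr.
have hAGM := leif_AGM (A := 'I_d) (E := E) (fun i _ => ler0n _ _).
have hA := leif_le hAGM; rewrite -/mu card_ord in hA.
have kmu : (k%:R : R) <= mu ^+ d.
  apply: le_trans hA.
  by rewrite prodE ler_nat.
have mu0 : 0 <= mu by rewrite /mu divr_ge0 // sumE ler0n.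
have muE : mu = (S + d)%:R / d%:R by rewrite /mu sumE card_ord.
have : (k%:R : R) `^ (d%:R)^-1 <= mu.
  have -> : mu = (mu ^+ d) `^ (d%:R)^-1.
    by rewrite -powR_mulrn // -powRrM mulfV ?gt_eqF // powRr1.
  apply: ge0_ler_powR; [rewrite invr_ge0; exact: ler0n | by rewrite nnegrE ler0n | by rewrite nnegrE exprn_ge0 | exact: kmu].
rewrite muE => h.
rewrite -(ler_pM2l d0R) in h.
rewrite mulrBr mulr1 lerBlDr; apply: le_trans h _.
by rewrite mulrC divfK ?gt_eqF // natrD.
Qed.


End MG.
Import MG.

Local Open Scope ring_scope.

Theorem theorem6p18 (R : realType) (p : nat) (hp : prime p)
    (C : {group {perm 'I_p}}) (hcyc : cyclic C) (hCp : #|C| = p)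
    (hreg : [transitive C, on [set: 'I_p] | 'P]) (k : nat) (hk : (0 < k)%N) :
  (forall d : nat, (0 < d)%N ->
     ((p%:R `^ (d%:R * (k%:R `^ (d%:R)^-1 - 1)))%:E
        <= beta_d R (Qc k C) (Omc k C) d (Pc k C) (Pc k C))%E) /\
  ((p%:R `^ (ln (k%:R : R) / ln 2))%:E
     <= beta R (Qc k C) (Omc k C) (Pc k C) (Pc k C))%E.
Proof.
have p1 : (1 : R) <= p%:R by rewrite ler1n prime_gt0.
have p0 : (0 : R) <= p%:R by rewrite ler0n.
have nl := @P_notlocal p hp C hCp k hk.
have logb : forall d, ((p%:R `^ (ln (k%:R : R) / ln 2))%:E
     <= beta_d R (Qc k C) (Omc k C) d (Pc k C) (Pc k C))%E.
  move=> d; apply: (@claim R p hp C hcyc hCp k d _ _ _ _ nl) => cs scs kcs.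
  rewrite -powR_mulrn //; apply: ler_powR => //.
  have k2 : (k <= 2 ^ (\sum_(c <- cs) c))%N.
    by apply: leq_trans (prod_le_exp2 cs); rewrite -(prednK hk).
  have ln2 : (0 : R) < ln 2 by apply: ln_gt0; rewrite ltr1n.
  rewrite ler_pdivrMr // mulr_natl -lnXn; last by rewrite ltr0n.
  rewrite ler_ln ?posrE ?ltr0n ?exprn_gt0 //.
  by rewrite -natrX ler_nat.
split.
  move=> d d0; apply: (@claim R p hp C hcyc hCp k d _ _ _ _ nl) => cs scs kcs.
  rewrite -powR_mulrn //; apply: ler_powR => //.
  apply: amgm_bound => //; by rewrite -(prednK hk).
pose u := fun d => beta_d R (Qc k C) (Omc k C) d (Pc k C) (Pc k C).
have mono : {homo u : n m / (n <= m)%N >-> (m <= n)%E}.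
  apply: (@homo_leq _ u (fun a b => b <= a)%E) => //.
    by move=> y x z h1 h2; apply: le_trans h2 h1.
  move=> i; apply: (@beta_mono R _ (Qg p C k) (Omc k C) (@OmQ p C k)).
  exact: fintype.subxx.
have cv := ereal_nonincreasing_cvgn mono.
rewrite /beta (cvg_lim _ cv) //.
apply: le_ereal_inf_tmp => y [d _ <-]; exact: logb.
Qed.
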